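(* Let $\mathcal{G}\subset\mathcal{S}$ with harmonic analogue $\mathcal{G}_H^0$. Suppose $p$ is a function of $n$ such that the Taylor coefficients $a_n(f)$ of every $f\in\mathcal{G}$ satisfy $|a_n(f)|\le p(n)$ for $n=2,3,\dots$. Then: (a) for every $f=h+\bar g\in\mathcal{G}_H^0$, the Taylor coefficients $A_n(f)$ of $h$ and $B_n(f)$ of $g$ satisfy $\big||A_n(f)|-|B_n(f)|\big|\le p(n)$ for $n=2,3,\dots$; (b) if $h_0\in\mathcal{G}$ has Taylor coefficients with $|a_n(h_0)|=p(n)$ for all $n=2,3,\dots$, then for an analytic function $g_0$ in $\mathbb{D}$, the harmonic function $f_0=h_0+\bar g_0$ belongs to $\mathcal{G}_H^0$ if and only if $g_0\equiv0$.
   Context: $\mathbb{D}$ is the open unit disk. $\mathcal{S}$ is the class of analytic univalent functions $f$ in $\mathbb{D}$ with $f(0)=0$, $f'(0)=1$. For $\mathcal{G}\subset\mathcal{S}$, its harmonic analogue $\mathcal{G}_H^0$ is the class of harmonic functions $f=h+\bar g$ ($h,g$ analytic in $\mathbb{D}$) such that $h+\epsilon g\in\mathcal{G}$ for every $\epsilon\in\mathbb{C}$ with $|\epsilon|=1$. *)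

(* Defs.v *)
From HB Require Import structures.
From mathcomp Require Import all_boot all_order all_algebra.
From mathcomp Require Import all_classical all_reals all_analysis.
From mathcomp Require Import complex.
Import Order.TTheory GRing.Theory Num.Theory.
Import numFieldTopology.Exports numFieldNormedType.Exports.

(* Topology on R[i] given by its complex modulus (the numClosedFieldType metric). *)
HB.instance Definition _ (R : rcfType) := PseudoPointedMetric.copy R[i] (R[i])^o.

Set Implicit Arguments.
Unset Strict Implicit.
Unset Printing Implicit Defensive.

Local Open Scope ring_scope.
Local Open Scope classical_set_scope.

Definition disk (R : realType) := {z : R[i] | `|z| < 1}.

Definition taylor_coefs (R : realType) (f : disk R -> R[i]) (a : nat -> R[i]) : Prop :=
  forall z : disk R,
    (fun N : nat => \sum_(k < N) a k * (sval z) ^+ k) @ \oo --> (f z : R[i]).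

Definition analytic_disk (R : realType) (f : disk R -> R[i]) : Prop :=
  exists a, taylor_coefs f a.

Definition classS (R : realType) (f : disk R -> R[i]) : Prop :=
  injective f /\
  exists a, taylor_coefs f a /\ a 0%N = 0 /\ a 1%N = 1.

(* Harmonic analogue G_H^0 of a class G: the harmonic functions f = h + conj g,
   represented by the pair (h, g) of analytic functions, such that
   h + eps g belongs to G for every unimodular eps. *)
Definition harmonic_analogue (R : realType) (G : (disk R -> R[i]) -> Prop)
    (h g : disk R -> R[i]) : Prop :=
  analytic_disk h /\ analytic_disk g /\
  forall eps : R[i], `|eps| = 1 -> G (fun z => h z + eps * g z).

(* Main.v *)
Require Import Defs.
From HB Require Import structures.
From mathcomp Require Import all_boot all_order all_algebra.
From mathcomp Require Import all_classical all_reals all_analysis.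
From mathcomp Require Import complex.
From mathcomp Require Import ring lra.
Import Order.TTheory GRing.Theory Num.Theory.
Import numFieldNormedType.Exports.
Local Open Scope ring_scope.
Local Open Scope complex_scope.

Section S.
Variable R : realType.
Local Open Scope classical_set_scope.

Lemma lim_ev_cst (u : nat -> R[i]) (l c : R[i]) (K : nat) :
  u @ \oo --> l -> (forall N, (K <= N)%N -> u N = c) -> l = c.
Proof.
move=> ul uc.
have e : {near \oo, (fun _ => c) =1 u}.
  exists K => // N /= HN; symmetry; exact: uc.
have Hc : u @ \oo --> c by apply: (cvg_trans (near_eq_cvg e)); exact: cvg_cst.
refine (cvg_unique _ ul Hc). exact: (@norm_hausdorff _ R[i]^o).
Qed.

Lemma tc_lin (h g : disk R -> R[i]) A B e :
  taylor_coefs h A -> taylor_coefs g B ->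
  taylor_coefs (fun z => h z + e * g z) (fun k => A k + e * B k).
Proof.
move=> hA gB z.
have -> : (fun N => \sum_(k < N) (A k + e * B k) * sval z ^+ k) =
   (fun N => \sum_(k < N) A k * sval z ^+ k + e * \sum_(k < N) B k * sval z ^+ k).
  apply: funext => N /=. rewrite mulr_sumr -big_split /=. apply: eq_bigr => k _. by rewrite mulrDl mulrA.
apply: (@cvgD _ R[i]^o).
  exact: hA.
apply: cvgMr. exact: gB.
Qed.

Lemma geo (F : numDomainType) (x : F) n : 0 <= x -> x *+ 2 <= 1 ->
  \sum_(i < n) x ^+ i <= 2 - 2 * x ^+ n.
Proof.
move=> x0 x2; elim: n => [|n IH]; first by rewrite big_ord0 expr0 mulr1 subrr.
rewrite big_ord_recr /=.
apply: (le_trans (lerD IH (lexx _))).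
rewrite -addrA lerD2l.
have -> : - (2 * x ^+ n) + x ^+ n = - x ^+ n by ring.
rewrite lerN2 exprS mulrA -[X in _ <= X]mul1r ler_wpM2r ?exprn_ge0 //.
by rewrite mulr_natl.
Qed.

Lemma real_zero (x K : R[i]) : 0 <= x -> 0 <= K ->
  (forall t : R, 0 < t -> t <= 4^-1 -> x <= t%:C * K) -> x = 0.
Proof.
move=> x0 K0 H.
have rx : x \is Num.real := ger0_real x0.
have rK : K \is Num.real := ger0_real K0.
rewrite -(RRe_real rx) -(RRe_real rK) in x0 K0 H *.
set a := complex.Re x in x0 H *; set k := complex.Re K in K0 H *. rewrite !ler0c in x0 K0. move: x0 K0 => a0 k0.
have [az|ap] := eqVneq a 0; first by rewrite az.
have {}ap : 0 < a by rewrite lt_def ap.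
pose d := 4 * (a + k + 1).
have dp : 0 < d by rewrite /d; lra.
have := H (a / d).
rewrite -rmorphM lecR.
have td : a / d * d = a by rewrite divfK ?gt_eqF.
have t0 : 0 < a / d by apply: divr_gt0.
have t4 : a / d <= 4^-1.
  rewrite ler_pdivrMr // ler_pdivlMl //. rewrite /d. lra.
move=> /(_ t0 t4) hh. exfalso. rewrite /d in td hh. nra.
Qed.

Lemma ev_small (u : nat -> R[i]) (e : R[i]) : u @ \oo --> 0 -> 0 < e ->
  exists K, forall N, (K <= N)%N -> `|u N| < e.
Proof.
move=> /(@cvgrPdist_lt _ R[i]^o) /(_ e) H e0.
have := H e0. case=> K _ HK. exists K => N KN.
have := HK N KN. by rewrite sub0r normrN.
Qed.

Lemma tc_zero (c : nat -> R[i]) :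
  (forall z : disk R, (fun N => \sum_(k < N) c k * sval z ^+ k) @ \oo --> 0) ->
  c 1%N = 0.
Proof.
move=> Hc.
have d0 : `|(0:R[i])| < 1 by rewrite normr0 ltr01.
have c0 : c 0%N = 0.
  have := Hc (exist _ 0 d0) => /= H.
  symmetry; apply: (@lim_ev_cst _ _ _ 1%N H) => -[//|N] _.
  rewrite big_ord_recl expr0 mulr1 big1 ?addr0 // => i _.
  by rewrite exprS mul0r mulr0.
have dh : `|(2^-1:R[i])| < 1.
  by rewrite ger0_norm ?invr_ge0 ?ler0n // invf_lt1 ?ltr0n // ltr1n.
have [K HK] := @ev_small _ 1 (Hc (exist (fun z : R[i] => `|z| < 1) (2^-1) dh)) ltr01.
simpl in HK.
have two : (2 : R[i]) = 1 + 1 by rewrite -mulr2n.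
have hb1 : forall k, (K <= k)%N -> `|c k| <= 2 * 2 ^+ k.
  move=> k Kk.
  have e1 : c k * 2^-1 ^+ k = \sum_(j < k.+1) c j * 2^-1 ^+ j - \sum_(j < k) c j * 2^-1 ^+ j.
    rewrite big_ord_recr /= addrAC subrr add0r //.
  have : `|c k * 2^-1 ^+ k| <= 2.
    rewrite e1. apply: (le_trans (ler_normB _ _)). rewrite two. apply: ltW.
    apply: ltrD; apply: HK => //. exact: leqW.
  rewrite normrM normrX [`|2^-1|]ger0_norm ?invr_ge0 ?ler0n // => h.
  have := ler_wpM2r (exprn_ge0 k (ler0n _ 2)) h.
  by rewrite -mulrA -exprMn mulVf ?pnatr_eq0 // expr1n mulr1.
set M := 2 + \sum_(j < K) `|c j|.
have M2 : 2 <= M by rewrite /M lerDl sumr_ge0.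
have M0 : 0 <= M by apply: le_trans M2; rewrite ler0n.
have hb : forall k, `|c k| <= M * 2 ^+ k.
  move=> k; case: (leqP K k) => [Kk|kK].
    apply: le_trans (hb1 k Kk) _. by apply: ler_wpM2r; rewrite ?exprn_ge0 ?ler0n.
  apply: (@le_trans _ _ M); last by apply: ler_peMr => //; apply: exprn_ege1; rewrite ler1n.
  rewrite /M (bigD1 (Ordinal kK)) //= addrCA lerDl.
  by apply: addr_ge0; rewrite ?ler0n ?sumr_ge0.
apply/normr0_eq0; apply: (@real_zero _ (1 + M * 8)) => //.
  by apply: addr_ge0; rewrite ?ler01 // mulr_ge0 ?ler0n.
move=> t t0 t4.
set T := t%:C.
have T0 : 0 < T by rewrite ltcE /= eqxx t0.
have dT : `|T| < 1 by rewrite ger0_norm ?ltW // ltcE /= eqxx; lra.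
have T4 : (2 * T) *+ 2 <= 1.
  by rewrite lecE /=; simpc; rewrite /=; lra.
have T20 : 0 < T ^+ 2 by apply: exprn_gt0.
have [K2 HK2] := @ev_small _ (T ^+ 2) (Hc (exist (fun z : R[i] => `|z| < 1) T dT)) T20.
have hu := HK2 K2.+2 (leqW (leqW (leqnn _))).
rewrite /= -(big_mkord xpredT (fun k => c k * T ^+ k)) !big_nat_recl // c0 mul0r add0r expr1 in hu.
set S := \sum_(0 <= i < K2) c i.+2 * T ^+ i.+2 in hu.
have hS : `|S| <= M * 8 * T ^+ 2.
  apply: le_trans (ler_norm_sum _ _ _) _.
  apply: (@le_trans _ _ (\sum_(0 <= i < K2) M * (2 * T) ^+ 2 * (2 * T) ^+ i)).
    apply: ler_sum => i _.
    have -> : M * (2 * T) ^+ 2 * (2 * T) ^+ i = M * 2 ^+ i.+2 * T ^+ i.+2.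
      by rewrite -mulrA -exprD add2n exprMn mulrA.
    rewrite normrM normrX (ger0_norm (ltW T0)).
    by apply: ler_wpM2r; [exact: exprn_ge0 (ltW T0) | exact: hb].
  rewrite -mulr_sumr big_mkord.
  have g := @geo _ (2 * T) K2 (mulr_ge0 (ler0n _ 2) (ltW T0)) T4.
  have g2 : \sum_(i < K2) (2 * T) ^+ i <= 2.
    apply: le_trans g _. rewrite gerDl oppr_le0. by rewrite mulr_ge0 ?ler0n ?exprn_ge0 // mulr_ge0 ?ler0n ?ltW.
  have := ler_wpM2l (mulr_ge0 M0 (exprn_ge0 2 (mulr_ge0 (ler0n _ 2) (ltW T0)))) g2.
  move=> /le_trans; apply. rewrite le_eqVlt; apply/orP; left; apply/eqP; ring.
have h1 : `|c 1%N * T| <= `|c 1%N * T + S| + `|S|.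
  by rewrite -[X in `|X| <= _](addrK S) ler_normB.
rewrite normrM (ger0_norm (ltW T0)) in h1.
rewrite -(ler_pM2r T0).
apply: (le_trans h1).
have -> : T * (1 + M * 8) * T = T ^+ 2 + M * 8 * T ^+ 2 by ring.
apply: lerD; [exact: ltW | exact: hS].
Qed.

Lemma uniq1 (f : disk R -> R[i]) a b : taylor_coefs f a -> taylor_coefs f b -> a 1%N = b 1%N.
Proof.
move=> fa fb; apply/eqP; rewrite -subr_eq0; apply/eqP.
apply: (@tc_zero (fun k => a k - b k)) => z.
have -> : (fun N => \sum_(k < N) (a k - b k) * sval z ^+ k) =
   (fun N => \sum_(k < N) a k * sval z ^+ k - \sum_(k < N) b k * sval z ^+ k).
  apply: funext => N /=. rewrite -sumrB. apply: eq_bigr => k _. by rewrite mulrBl.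
have := @cvgB _ R[i]^o _ _ _ _ _ _ _ (fa z) (fb z).
rewrite subrr; apply; exact: _.
Qed.

Lemma tc_val0 (f : disk R -> R[i]) a (z : disk R) : sval z = 0 -> taylor_coefs f a -> f z = a 0%N.
Proof.
move=> z0 fa. apply: (@lim_ev_cst _ _ _ 1%N (fa z)) => -[//|N] _.
rewrite z0 big_ord_recl expr0 mulr1 big1 ?addr0 // => i _.
by rewrite exprS mul0r mulr0.
Qed.

Lemma tc_allzero (f : disk R -> R[i]) a (z : disk R) : taylor_coefs f a -> (forall k, a k = 0) -> f z = 0.
Proof.
move=> fa a0. apply: (@lim_ev_cst _ _ _ 0%N (fa z)) => N _.
by rewrite big1 // => i _; rewrite a0 mul0r.
Qed.

Lemma align (A B : R[i]) : A != 0 -> exists e : R[i], `|e| = 1 /\ e * B = A * (`|B| / `|A|).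
Proof.
move=> A0.
have nA : `|A| != 0 by rewrite normr_eq0.
have [->|B0] := eqVneq B 0.
  by exists 1; rewrite normr1 mulr0 normr0 mul0r mulr0.
have nB : `|B| != 0 by rewrite normr_eq0.
exists ((A / `|A|) * (`|B| / B)); split.
  rewrite !normrM !normfV !normr_id mulfV // mulfV // mulr1 //.
by rewrite -mulrA divfK // mulrAC -mulrA.
Qed.
End S.
Arguments align {R} A B.
Arguments uniq1 {R f a b}.
Arguments tc_val0 {R f a} z.
Arguments tc_allzero {R f a} z.
Arguments tc_lin {R h g A B} e.

Theorem theorem2p5 (R : realType) (G : (disk R -> R[i]) -> Prop)
    (p : nat -> R)
    (HGS : forall f, G f -> classS f)
    (Hp : forall f a, G f -> taylor_coefs f a ->
            forall n : nat, (2 <= n)%N -> `|a n| <= (p n)%:C) :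
  (forall h g A B, harmonic_analogue G h g ->
      taylor_coefs h A -> taylor_coefs g B ->
      forall n : nat, (2 <= n)%N -> `| `|A n| - `|B n| | <= (p n)%:C)
  /\
  (forall h0 a0, G h0 -> taylor_coefs h0 a0 ->
      (forall n : nat, (2 <= n)%N -> `|a0 n| = (p n)%:C) ->
      forall g0, analytic_disk g0 ->
        (harmonic_analogue G h0 g0 <-> forall z, g0 z = 0)).
Proof.
split.
  move=> h g A B [_ [_ HG]] hA gB n n2.
  have [A0|A0] := eqVneq (A n) 0.
    have := Hp _ _ (HG 1 (normr1 _)) (tc_lin 1 hA gB) n n2.
    by rewrite A0 add0r mul1r normr0 sub0r normrN normr_id.
  have [e [e1 eB]] := align (A n) (B n) A0.
  have := Hp _ _ (HG (- e) ltac:(by rewrite normrN)) (tc_lin (- e) hA gB) n n2.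
  have nA : `|A n| != 0 by rewrite normr_eq0.
  have -> : A n + - e * B n = (A n / `|A n|) * (`|A n| - `|B n|).
    by rewrite mulNr eB mulrBr divfK // mulrAC -mulrA.
  by rewrite normrM normrM normfV normr_id mulfV // mul1r.
move=> h0 a0 Gh0 ha0 hp g0 ag0; split; last first.
  move=> g00; split; first by exists a0.
  split => // eps _.
  have -> : (fun z => h0 z + eps * g0 z) = h0 by apply: funext => z; rewrite g00 mulr0 addr0.
  exact: Gh0.
move=> [_ [[B gB] HG]].
have Bn : forall n, (2 <= n)%N -> B n = 0.
  move=> n n2.
  have [A0|A0] := eqVneq (a0 n) 0.
    have := Hp _ _ (HG 1 (normr1 _)) (tc_lin 1 ha0 gB) n n2.
    rewrite -(hp n n2) A0 add0r mul1r normr0 normr_le0.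
    by move/eqP.
  have [e [e1 eB]] := align (a0 n) (B n) A0.
  have := Hp _ _ (HG e e1) (tc_lin e ha0 gB) n n2.
  have nA : `|a0 n| != 0 by rewrite normr_eq0.
  have -> : a0 n + e * B n = (a0 n / `|a0 n|) * (`|a0 n| + `|B n|).
    by rewrite eB mulrDr divfK // mulrAC -mulrA.
  rewrite normrM normrM normfV normr_id mulfV // mul1r -(hp n n2).
  rewrite ger0_norm ?addr_ge0 // gerDl normr_le0.
  by move/eqP.
have d0 : `|(0:R[i])| < 1 by rewrite normr0 ltr01.
pose z0 := exist (fun z : R[i] => `|z| < 1) 0 d0.
have [_ [a1 [ha1 [a10 a11]]]] := HGS _ (HG 1 (normr1 _)).
have [_ [a2 [ha2 [a20 a21]]]] := HGS _ Gh0.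
have B0 : B 0%N = 0.
  have e1 := tc_val0 z0 erefl ha1.
  have e2 := tc_val0 z0 erefl ha2.
  have e3 := tc_val0 z0 erefl gB.
  by rewrite -e3; move: e1; rewrite e2 a10 a20 add0r mul1r.
have B1 : B 1%N = 0.
  have u1 := uniq1 (tc_lin 1 ha0 gB) ha1.
  have u2 := uniq1 ha0 ha2.
  move: u1; rewrite a11 u2 a21 mul1r => h. by rewrite -(addrK 1 (B 1%N)) [B 1%N + 1]addrC h subrr.
move=> z; apply: (tc_allzero z gB) => -[|[|n]] //.
exact: Bn.
Qed.
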